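(* Let $V$ be a real vector space, $C$ a convex cone in $V$ and $Y$ a decomposably $C$-antichain-convex subset of $V$. (1) $\mathcal{O}(C,\operatorname{co}(Y))\subseteq\mathcal{O}(C,Y)$. (2) If $C$ is pointed, then $\mathcal{O}(C,Y)=\mathcal{O}(C,\operatorname{co}(Y))$.
   Context: A cone in $V$ is a subset $C$ with $\lambda C\subseteq C$ for all $\lambda>0$ (possibly empty, need not contain $0$); it is pointed iff $C\cap(-C)\subseteq\{0\}$. $S\subseteq V$ is $C$-antichain-convex iff for all $x,y\in S$ and $\lambda\in[0,1]$ with $y-x\notin C\cup(-C)$ one has $\lambda x+(1-\lambda)y\in S$; $S$ is decomposably $C$-antichain-convex iff $S=S_1+\dots+S_n$ (Minkowski sum) for finitely many $C$-antichain-convex $S_i\subseteq V$. For $Z\subseteq V$, $y\in Z$ is a $C$-Pareto optimum of $Z$ iff $(Z\setminus\{y\})\cap(y+C)=\emptyset$; $\mathcal{O}(C,Z)$ is the set of $C$-Pareto optima of $Z$. $\operatorname{co}$ denotes convex hull. *)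

(* Defs.v *)
From mathcomp Require Import all_boot all_order all_algebra.
From mathcomp Require Import reals.
Set Implicit Arguments. Unset Strict Implicit. Unset Printing Implicit Defensive.
Import Order.TTheory GRing.Theory Num.Theory.
Local Open Scope ring_scope.

Section Defs.
Variables (R : realType) (V : lmodType R).

(* cone: lambda C \subseteq C for all lambda > 0 (may be empty, need not contain 0) *)
Definition is_cone (C : V -> Prop) : Prop :=
  forall x, C x -> forall l : R, 0 < l -> C (l *: x).

Definition is_convex (S : V -> Prop) : Prop :=
  forall x y, S x -> S y -> forall l : R, 0 <= l <= 1 ->
    S (l *: x + (1 - l) *: y).

Definition is_convex_cone (C : V -> Prop) : Prop := is_cone C /\ is_convex C.

Definition is_pointed (C : V -> Prop) : Prop :=
  forall x, C x -> C (- x) -> x = 0.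

Definition antichain_convex (C S : V -> Prop) : Prop :=
  forall x y, S x -> S y -> ~ C (y - x) -> ~ C (- (y - x)) ->
    forall l : R, 0 <= l <= 1 -> S (l *: x + (1 - l) *: y).

Definition minkowski_sum (n : nat) (S : 'I_n -> V -> Prop) : V -> Prop :=
  fun v => exists p : 'I_n -> V, (forall i, S i (p i)) /\ v = \sum_(i < n) p i.

Definition decomp_antichain_convex (C S : V -> Prop) : Prop :=
  exists (n : nat) (Si : 'I_n -> V -> Prop),
    (forall i, antichain_convex C (Si i)) /\
    (forall v, S v <-> minkowski_sum Si v).

Definition conv_hull (Y : V -> Prop) : V -> Prop :=
  fun v => exists (n : nat) (p : 'I_n -> V) (w : 'I_n -> R),
    (forall i, Y (p i)) /\ (forall i, 0 <= w i) /\ \sum_(i < n) w i = 1 /\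
    v = \sum_(i < n) w i *: p i.

Definition pareto_opt (C Z : V -> Prop) (y : V) : Prop :=
  Z y /\ forall z, Z z -> z <> y -> ~ (exists c, C c /\ z = y + c).

End Defs.

(* Main.v *)
Require Import Defs.
From mathcomp Require Import all_boot all_order all_algebra.
From mathcomp Require Import reals.
From mathcomp Require Import ring lra.
From Stdlib Require Import Classical.
Import Order.TTheory GRing.Theory Num.Theory.
Local Open Scope ring_scope.

Section H.
Variables (R : realType) (V : lmodType R) (C : V -> Prop).
Hypothesis hC : is_convex_cone C.

Lemma gl (W : zmodType) (u a b X : W) : u - (b + X) = (u - (a + X)) + (a - b).
Proof. rewrite !opprD !addrA [LHS]addrAC; congr (_ - b). by rewrite (addrAC u (-a)) subrK. Qed.

Definition Dz (d : V) := d = 0 \/ C d.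

Lemma DzD a b : Dz a -> Dz b -> Dz (a + b).
Proof.
case=> [->|Ca]; first by rewrite add0r.
case=> [->|Cb]; first by rewrite addr0; right.
right.
have h := hC.2 a b Ca Cb (2^-1).
have h2 : 0 <= (2^-1 : R) <= 1.
  by apply/andP; split; [rewrite invr_ge0 | rewrite invf_le1 //]; lra.
have h0 : (0:R) < 2 by lra.
have := hC.1 _ (h h2) 2 h0.
have -> : 2 *: (2^-1 *: a + (1 - 2^-1) *: b) = a + b :> V.
  rewrite scalerDr !scalerA mulfV ?pnatr_eq0 // scale1r.
  have -> : 2 * (1 - 2^-1) = 1 :> R by field.
  by rewrite scale1r.
by [].
Qed.

Lemma DzZ k d : 0 <= k -> C d -> Dz (k *: d).
Proof.
move=> hk Cd; have [->|kn0] := eqVneq k 0; first by left; rewrite scale0r.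
right; apply: hC.1 => //; by rewrite lt0r kn0 hk.
Qed.

Lemma Dz_sum n (F : 'I_n -> V) : (forall i, Dz (F i)) -> Dz (\sum_i F i).
Proof. move=> h; apply: big_ind => //; [by left | exact: DzD]. Qed.

Variables (N : nat) (S : 'I_N -> V -> Prop).
Hypothesis hS : forall i, antichain_convex C (S i).

Lemma merge (x y : V) (w0 w1 : R) i : S i x -> S i y -> 0 <= w0 -> 0 <= w1 ->
  exists a, S i a /\ Dz ((w0 + w1) *: a - (w0 *: x + w1 *: y)).
Proof.
move=> Sx Sy h0 h1.
have [s0|sn0] := eqVneq (w0 + w1) 0.
  have e0 : w0 = 0 by lra.
  have e1 : w1 = 0 by lra.
  exists x; split => //; left; by rewrite s0 e0 e1 !scale0r addr0 subrr.
case: (classic (C (y - x))) => [Cc|nC].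
  exists y; split => //.
  have -> : (w0 + w1) *: y - (w0 *: x + w1 *: y) = w0 *: (y - x).
    by rewrite scalerBr scalerDl opprD addrACA subrr addr0.
  exact: DzZ.
case: (classic (C (- (y - x)))) => [Cc|nC'].
  exists x; split => //.
  have -> : (w0 + w1) *: x - (w0 *: x + w1 *: y) = w1 *: (- (y - x)).
    by rewrite opprB scalerBr scalerDl opprD addrACA subrr add0r.
  exact: DzZ.
have spos : 0 < w0 + w1 by rewrite lt0r sn0; lra.
pose l := w0 / (w0 + w1).
exists (l *: x + (1 - l) *: y); split.
  apply: hS => //; apply/andP; split.
    by rewrite /l divr_ge0 //; lra.
  by rewrite /l ler_pdivrMr // mul1r; lra.
left; rewrite scalerDr !scalerA.
have -> : (w0 + w1) * l = w0 by rewrite /l; field; lra.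
have -> : (w0 + w1) * (1 - l) = w1 by rewrite /l; field; lra.
by rewrite subrr.
Qed.

Lemma dom m : forall (P : 'I_m.+1 -> 'I_N -> V) (w : 'I_m.+1 -> R),
 (forall j i, S i (P j i)) -> (forall j, 0 <= w j) -> \sum_j w j = 1 ->
 exists p : 'I_N -> V, (forall i, S i (p i)) /\
   Dz (\sum_i p i - \sum_j w j *: \sum_i P j i).
Proof.
elim: m => [|m IH] P w HP Hw Hs.
  exists (P ord0); split => //.
  by rewrite big_ord1 in Hs; rewrite big_ord1 Hs scale1r subrr; left.
pose o1 : 'I_m.+2 := lift ord0 ord0.
have ha : forall i, exists a, S i a /\
   Dz ((w ord0 + w o1) *: a - (w ord0 *: P ord0 i + w o1 *: P o1 i)).
  by move=> i; apply: merge.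
have [A HA] := fin_all_exists ha.
pose P' := fun j : 'I_m.+1 =>
  if unlift ord0 j is Some k then P (lift ord0 (lift ord0 k)) else A.
pose w' := fun j : 'I_m.+1 =>
  if unlift ord0 j is Some k then w (lift ord0 (lift ord0 k)) else w ord0 + w o1.
have U0 : unlift (@ord0 m) ord0 = None := unlift_none _.
have HP' : forall j i, S i (P' j i).
  move=> j i; rewrite /P'; case: (unliftP ord0 j) => [k _|_]; first exact: HP.
  by case: (HA i).
have Hw' : forall j, 0 <= w' j.
  move=> j; rewrite /w'; case: (unliftP ord0 j) => [k _|_]; first exact: Hw.
  by rewrite addr_ge0.
have Hs' : \sum_j w' j = 1.
  rewrite big_ord_recl /w' U0 -Hs big_ord_recl big_ord_recl addrA.
  by congr (_ + _); apply: eq_bigr => k _; rewrite liftK.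
have [p [Sp Dp]] := IH P' w' HP' Hw' Hs'.
exists p; split => //.
pose X := \sum_(k < m) w (lift ord0 (lift ord0 k)) *: \sum_i P (lift ord0 (lift ord0 k)) i.
have E1 : \sum_j w' j *: \sum_i P' j i = (w ord0 + w o1) *: \sum_i A i + X.
  rewrite big_ord_recl /w' /P' U0; congr (_ + _).
  by apply: eq_bigr => k _; rewrite liftK.
have E2 : \sum_j w j *: \sum_i P j i =
    (w ord0 *: \sum_i P ord0 i + w o1 *: \sum_i P o1 i) + X.
  by rewrite big_ord_recl big_ord_recl addrA.
have E3 : \sum_i ((w ord0 + w o1) *: A i - (w ord0 *: P ord0 i + w o1 *: P o1 i))
   = (w ord0 + w o1) *: \sum_i A i - (w ord0 *: \sum_i P ord0 i + w o1 *: \sum_i P o1 i).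
  by rewrite sumrB big_split /= !scaler_sumr.
rewrite E2 (gl _ _ ((w ord0 + w o1) *: \sum_i A i)) -E1 -E3.
apply: DzD => //; apply: Dz_sum => i; exact: (HA i).2.
Qed.
End H.

Theorem theorem5 (R : realType) (V : lmodType R) (C Y : V -> Prop) :
  is_convex_cone C -> decomp_antichain_convex C Y ->
  (forall y, pareto_opt C (conv_hull Y) y -> pareto_opt C Y y) /\
  (is_pointed C -> forall y, pareto_opt C Y y <-> pareto_opt C (conv_hull Y) y).
Proof.
move=> hC [n [Si [hac hY]]].
have Yco : forall z, Y z -> conv_hull Y z.
  move=> z Yz; exists 1%N, (fun _ => z), (fun _ => 1); split=> //; split=> [_|].
    exact: ler01.
  by rewrite !big_ord1 scale1r.
have domco : forall z, conv_hull Y z -> exists z', Y z' /\ @Dz R V C (z' - z).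
  move=> z [k [p [w [Yp [w0 [ws ->]]]]]].
  have hP : forall j, exists Pj : 'I_n -> V, (forall i, Si i (Pj i)) /\ p j = \sum_i Pj i.
    by move=> j; have [q [h1 h2]] := (hY (p j)).1 (Yp j); exists q.
  have [P HP] := fin_all_exists hP.
  clear hP; case: k p w Yp w0 ws P HP => [|m] p w Yp w0 ws P HP.
    by rewrite big_ord0 in ws; have := @oner_neq0 R; rewrite -ws eqxx.
  have [q [Sq Dq]] := @dom R V C hC n Si hac m (fun j => P j) w
     (fun j i => (HP j).1 i) w0 ws.
  exists (\sum_i q i); split; first by apply/hY; exists q.
  suff -> : \sum_j w j *: p j = \sum_j w j *: \sum_i P j i by [].
  by apply: eq_bigr => j _; rewrite (HP j).2.
have part1 : forall y, pareto_opt C (conv_hull Y) y -> pareto_opt C Y y.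
  move=> y [coy opt].
  have Yy : Y y.
    have [z' [Yz' Dz']] := domco y coy.
    case: (classic (z' = y)) => [<-|ne] //.
    case: Dz' => [/eqP|Cd]; first by rewrite subr_eq0 => /eqP.
    exfalso; apply: (opt z' (Yco _ Yz') ne); exists (z' - y); split => //.
    by rewrite addrC subrK.
  by split => // z Yz; exact: opt z (Yco _ Yz).
split => // pC y; split; last exact: part1.
case=> Yy opt; split; first exact: Yco.
move=> z coz nezy [c [Cc ez]].
have [z' [Yz' Dz']] := domco z coz.
have Dd : @Dz R V C (z' - y).
  by have := @DzD R V C hC _ _ Dz' (or_intror Cc); rewrite ez opprD addrA subrK.
case: (classic (z' = y)) => [ezy|ne].
  have e : z' - z = - c by rewrite ez ezy opprD addrA subrr add0r.
  have c0 : c = 0.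
    case: Dz' => h.
      by move/eqP: e; rewrite h eq_sym oppr_eq0 => /eqP.
    by apply: pC => //; rewrite -e.
  by apply: nezy; rewrite ez c0 addr0.
case: Dd => [/eqP|Cd]; first by rewrite subr_eq0 => /eqP.
apply: (opt z' Yz' ne); exists (z' - y); split => //.
by rewrite addrC subrK.
Qed.
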